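(* Let $T:\mathbb{R}^n\to\mathbb{R}^n$ be topical. The set of additive eigenvectors of $T$ is nonempty and bounded in the variation norm if and only if $$r(T^J_{-\infty})<\lambda(T^{[n]\setminus J}_\infty)$$ for every nonempty proper subset $J\subset[n]$.
   Context: $T$ is topical if it is order-preserving ($x\le y\Rightarrow T(x)\le T(y)$, entrywise) and additively homogeneous ($T(x+c\mathbf{1})=T(x)+c\mathbf{1}$ for all $c\in\mathbb{R}$, $\mathbf{1}$ the all-ones vector). $x\in\mathbb{R}^n$ is an additive eigenvector if $T(x)=x+\lambda\mathbf{1}$ for some $\lambda\in\mathbb{R}$. Variation norm: $\|x\|_{\mathrm{var}}=\max_ix_i-\min_jx_j$. A topical $T$ extends continuously to order-preserving additively homogeneous maps on $(-\infty,\infty]^n$ and on $[-\infty,\infty)^n$, again denoted $T$. For $\alpha\in[-\infty,\infty]$, $P^J_\alpha(x)_j=x_j$ for $j\in J$ and $\alpha$ otherwise; $T^J_{-\infty}=P^J_{-\infty}TP^J_{-\infty}$ on $[-\infty,\infty)^n$ and $T^J_\infty=P^J_\infty TP^J_\infty$ on $(-\infty,\infty]^n$. For such maps $S$: $r(S)=\inf_{x\in\mathbb{R}^n}\max_i(S(x)_i-x_i)$ and $\lambda(S)=\sup_{x\in\mathbb{R}^n}\min_i(S(x)_i-x_i)$, with values in $[-\infty,\infty]$. *)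

(* Defs.v *)
From HB Require Import structures.
From mathcomp Require Import all_boot all_order all_algebra.
From mathcomp Require Import all_classical all_reals ereal.
Set Implicit Arguments. Unset Strict Implicit. Unset Printing Implicit Defensive.
Import Order.TTheory GRing.Theory Num.Theory.
Local Open Scope classical_set_scope.
Local Open Scope ring_scope.

Section Topical.
Variables (R : realType) (n : nat).

Definition topical (T : ('I_n -> R) -> 'I_n -> R) : Prop :=
  (forall x y : 'I_n -> R, (forall i, x i <= y i) -> forall i, T x i <= T y i) /\
  (forall (x : 'I_n -> R) (c : R), T (fun i => x i + c) = (fun i => T x i + c)).

Definition add_eigvecs (T : ('I_n -> R) -> 'I_n -> R) : set ('I_n -> R) :=
  [set x | exists lam : R, forall i, T x i = x i + lam].

(* variation norm: max_i x_i - min_j x_j = max_{i,j} (x_i - x_j) *)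
Definition var_norm (x : 'I_n -> R) : R :=
  \big[Num.max/0]_(i : 'I_n) \big[Num.max/0]_(j : 'I_n) (x i - x j).

Definition var_bounded (A : set ('I_n -> R)) : Prop :=
  exists M : R, forall x, A x -> var_norm x <= M.

Local Open Scope ereal_scope.

(* continuous (monotone) extension of T to [-oo,oo)^n: decreasing limit = inf *)
Definition ext_lo (T : ('I_n -> R) -> 'I_n -> R) (y : 'I_n -> \bar R) (i : 'I_n)
  : \bar R :=
  ereal_inf [set (T z i)%:E | z in [set z : 'I_n -> R | forall j, y j <= (z j)%:E]].

(* continuous (monotone) extension of T to (-oo,oo]^n: increasing limit = sup *)
Definition ext_hi (T : ('I_n -> R) -> 'I_n -> R) (y : 'I_n -> \bar R) (i : 'I_n)
  : \bar R :=
  ereal_sup [set (T z i)%:E | z in [set z : 'I_n -> R | forall j, (z j)%:E <= y j]].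

Definition projJ (J : {set 'I_n}) (a : \bar R) (y : 'I_n -> \bar R) : 'I_n -> \bar R :=
  fun j => if j \in J then y j else a.

Definition embed (x : 'I_n -> R) : 'I_n -> \bar R := fun j => (x j)%:E.

(* T^J_{-oo} = P^J_{-oo} T P^J_{-oo} and T^J_{+oo} = P^J_{+oo} T P^J_{+oo},
   evaluated at real points x (only these are used in r and lambda) *)
Definition TJ_minf (T : ('I_n -> R) -> 'I_n -> R) (J : {set 'I_n})
  (x : 'I_n -> R) : 'I_n -> \bar R :=
  projJ J -oo (ext_lo T (projJ J -oo (embed x))).

Definition TJ_pinf (T : ('I_n -> R) -> 'I_n -> R) (J : {set 'I_n})
  (x : 'I_n -> R) : 'I_n -> \bar R :=
  projJ J +oo (ext_hi T (projJ J +oo (embed x))).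

Definition rr (S : ('I_n -> R) -> 'I_n -> \bar R) : \bar R :=
  ereal_inf [set \big[maxe/-oo]_(i : 'I_n) (S x i - (x i)%:E) | x in [set: 'I_n -> R]].

Definition lam (S : ('I_n -> R) -> 'I_n -> \bar R) : \bar R :=
  ereal_sup [set \big[mine/+oo]_(i : 'I_n) (S x i - (x i)%:E) | x in [set: 'I_n -> R]].

End Topical.

(* Main.v *)
Require Import Defs.
From HB Require Import structures.
From mathcomp Require Import all_boot all_order all_algebra.
From mathcomp Require Import all_classical all_reals ereal.
From mathcomp Require Import ring lra.
Import Order.TTheory GRing.Theory Num.Theory.
Local Open Scope classical_set_scope.
Local Open Scope ring_scope.

Section Basics.
Variables (R : realType) (n : nat).
Local Notation vec := ('I_n -> R).
Implicit Types (x y z : vec) (F : vec -> vec).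

Definition mono F := forall x y, (forall i, x i <= y i) -> forall i, F x i <= F y i.
Definition homog F := forall x c, F (fun i => x i + c) = (fun i => F x i + c).

Lemma homogE F x c i : homog F -> F (fun j => x j + c) i = F x i + c.
Proof. by move=> h; rewrite h. Qed.

Lemma nonexp F x y c : mono F -> homog F -> (forall i, x i <= y i + c) ->
  forall i, F x i <= F y i + c.
Proof. by move=> m h H i; rewrite -(homogE F y c i h); apply: m. Qed.

Lemma tarski F mu x y : mono F -> (forall i, y i <= x i) ->
  (forall i, y i + mu <= F y i) -> (forall i, F x i <= x i + mu) ->
  exists w, (forall i, y i <= w i /\ w i <= x i) /\ forall i, F w i = w i + mu.
Proof.
move=> m yx Hy Hx.
pose W := [set v : vec | (forall i, y i <= v i /\ v i <= x i) /\ forall i, v i + mu <= F v i].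
have Wy : W y by split=> // i; split=> //; exact: yx.
pose w i := sup [set v i | v in W].
have hs i : has_sup [set v i | v in W].
  split; first by exists (y i), y.
  by exists (x i) => _ [v [Hv _] <-]; case: (Hv i).
have wub v i : W v -> v i <= w i by move=> Wv; apply: sup_upper_bound (hs i) _ _; exists v.
have wle i : w i <= x i.
  apply: ge_sup; first by exists (y i), y.
  by move=> _ [v [Hv _] <-]; case: (Hv i).
have wF i : w i + mu <= F w i.
  rewrite -lerBrDr; apply: ge_sup; first by exists (y i), y.
  move=> _ [v Wv <-]; rewrite lerBrDr; apply: le_trans (Wv.2 i) _.
  by apply: m => j; apply: wub.
pose G i := F w i - mu.
have WG : W G.
  split=> [i|i]; first split.
  - rewrite /G lerBrDr; apply: le_trans (Hy i) _; apply: m => j; exact: wub.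
  - rewrite /G lerBlDr; apply: le_trans (Hx i); exact: m.
  - rewrite /G subrK; apply: m => j; by rewrite /G lerBrDr.
exists w; split=> [i|i]; first by split=> //; apply: wub.
apply/eqP; rewrite eq_le wF andbT -lerBlDr; exact: (wub G i WG).
Qed.

Lemma power F x m : mono F -> (0 < m)%N -> (forall i, iter m F x i <= x i) ->
  exists y, forall i, F y i <= y i.
Proof.
move=> mF; case: m => // m _ Hm.
pose y i := \big[Num.min/x i]_(j < m.+1) iter j F x i.
have yle (j : 'I_m.+1) i : y i <= iter j F x i by apply: bigmin_le.
exists y => i; apply: le_bigmin => [|j _].
- apply: le_trans (Hm i); rewrite ?iterS /=; apply: mF => l; exact: (yle ord_max l).
- case: j => -[|j] /= jm.
  + apply: le_trans (Hm i); rewrite ?iterS /=; apply: mF => l; exact: (yle ord_max l).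
  + rewrite ?iterS /=; apply: mF => l; exact: (yle (Ordinal (ltnW jm)) l).
Qed.

Lemma iter_shift F s k x : homog F ->
  iter k (fun x i => F x i - s) x = (fun i => iter k F x i - k%:R * s).
Proof.
move=> h; elim: k => [|k IH] /=; first by apply: funext => i; rewrite mul0r subr0.
rewrite IH h; apply: funext => i /=.
by rewrite -addn1 natrD mulrDl mul1r opprD addrA.
Qed.

Lemma unif (P : 'I_n -> nat -> Prop) :
  (forall i m m', P i m -> (m <= m')%N -> P i m') ->
  (forall i, exists m, P i m) -> exists m, forall i, P i m.
Proof.
move=> Pm H; have [f Hf] := choice H.
exists (\max_i f i) => i; apply: Pm (Hf i) _; exact: leq_bigmax.
Qed.

Lemma orbit F z mu : mono F -> homog F -> (forall i, F z i <= z i + mu) ->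
  (forall beta x, (forall i, F x i <= x i + beta) -> mu <= beta) ->
  exists (K : 'I_n -> Prop) (w : vec),
  [/\ exists i, K i,
      forall z', (forall i, K i -> w i <= z' i) -> forall i, K i -> w i + mu <= F z' i,
      (forall i, K i) -> forall i, F w i <= w i + mu &
      forall M, (forall x i j, F x i - F x j <= M) -> forall i, K i].
Proof.
move=> mF hF Hz Hmin.
pose a m i := iter m F z i - m%:R * mu.
have a0 : a 0%N = z by apply: funext => i; rewrite /a mul0r subr0.
have aS m i : a m.+1 i = F (a m) i - mu.
  rewrite /a (homogE F (iter m F z) (- (m%:R * mu)) i hF) /=.
  by rewrite -addn1 natrD mulrDl mul1r opprD addrA.
have adec m i : a m.+1 i <= a m i.
  elim: m i => [|m IH] i; first by rewrite aS a0 lerBlDr.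
  by rewrite !aS lerD2r; apply: mF => j; exact: IH.
have adecn m m' i : (m <= m')%N -> a m' i <= a m i.
  move=> /subnK <-; elim: (m' - m)%N => [|d IH]; first by rewrite add0n.
  by rewrite addSn; exact: le_trans (adec _ _) IH.
pose K i := exists L, forall m, L <= a m i.
pose w i := inf (range (fun m => a m i)).
have wlb i m : K i -> w i <= a m i.
  move=> [L HL]; apply: ge_inf; last by exists m.
  by exists L => _ [k _ <-]; exact: HL.
have wad i e : K i -> 0 < e -> exists m, a m i < w i + e.
  move=> [L HL] e0.
  have hi : has_inf (range (fun m => a m i)).
    by split; [exists (a 0%N i), 0%N | exists L => _ [k _ <-]; exact: HL].
  by have [_ [m _ <-] ?] := inf_adherent e0 hi; exists m.
have unb i L : ~ K i -> exists m, a m i < L.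
  move=> nK; case: (pselect (exists m, a m i < L)) => // nE; exfalso; apply: nK.
  by exists L => m; rewrite leNgt; apply/negP => h; apply: nE; exists m.
have Kne : exists i, K i.
  apply: contrapT => nK.
  have H1 i : exists m, a m i < z i - 1 by apply: unb => Ki; apply: nK; exists i.
  have [m Hm] := unif (fun i m => a m i < z i - 1)
    (fun i m m' h mm' => le_lt_trans (adecn _ _ i mm') h) H1.
  pose m1 := m.+1.
  have Hm1 i : a m1 i < z i - 1 := le_lt_trans (adec m i) (Hm i).
  have m10 : (0 < m1%:R :> R) by rewrite ltr0n.
  pose s := mu - m1%:R^-1.
  have mG : mono (fun x i => F x i - s) by move=> x y H i; rewrite lerD2r; exact: mF.
  have [y Hy] : exists y, forall i, F y i - s <= y i.
    apply: (power _ z m1 mG isT) => i.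
    rewrite iter_shift // /s mulrBr mulfV ?gt_eqF // opprB addrA.
    by rewrite addrAC -lerBrDr; apply: ltW; exact: Hm1.
  have Hs : forall i, F y i <= y i + s by move=> i; rewrite -lerBlDr.
  have := Hmin s y Hs; rewrite /s lerBrDr -[X in _ <= X]addr0 lerD2l invr_le0.
  by rewrite leNgt m10.
exists K, w; split => //.
- move=> z' Hz' i Ki; apply/ler_addgt0Pr => e e0.
  have H1 l : exists m, a m l <= z' l + e.
    case: (pselect (K l)) => Kl.
      have [m Hm] := wad l e Kl e0; exists m; apply: ltW; apply: lt_le_trans Hm _.
      by rewrite lerD2r; exact: Hz'.
    have [m Hm] := unb l (z' l) Kl; exists m; apply: ltW; apply: lt_le_trans Hm _.
    by rewrite lerDl ltW.
  have [m Hm] := unif (fun l m => a m l <= z' l + e)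
    (fun l m m' h mm' => le_trans (adecn _ _ l mm') h) H1.
  apply: le_trans _ (nonexp F (a m) z' e mF hF Hm i); rewrite -lerBrDr -aS; exact: wlb.
- move=> Kall i; rewrite -lerBlDr; apply: lb_le_inf; first by exists (a 0%N i), 0%N.
  move=> _ [m _ <-]; apply: le_trans _ (adec m i); rewrite aS lerD2r.
  by apply: mF => j; exact: wlb.
- move=> M HM i; have [j Kj] := Kne.
  exists (Num.min (z i) (w j - M)) => -[|m].
    by rewrite a0 ge_min lexx.
  rewrite ge_min; apply/orP; right; rewrite aS.
  apply: le_trans (_ : F (a m) j - M - mu <= _).
    by rewrite addrAC lerD2r -aS; exact: (wlb j m.+1 Kj).
  by rewrite lerD2r lerBlDr -lerBlDl; exact: HM.
Qed.

Lemma argmaxP (i0 : 'I_n) (P : pred 'I_n) (f : vec) : P i0 ->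
  exists2 j, P j & forall i, P i -> f i <= f j.
Proof. by move=> Pi0; case: (arg_maxP f Pi0) => j Pj H; exists j => // i Pi; exact: H. Qed.

Lemma argminP (i0 : 'I_n) (P : pred 'I_n) (f : vec) : P i0 ->
  exists2 j, P j & forall i, P i -> f j <= f i.
Proof. by move=> Pi0; case: (arg_minP f Pi0) => j Pj H; exists j => // i Pi; exact: H. Qed.

Lemma exist_eig F M (i0 : 'I_n) : mono F -> homog F ->
  (forall x i j, F x i - F x j <= M) -> exists v mu, forall i, F v i = v i + mu.
Proof.
move=> mF hF HM.
pose o : vec := fun _ => 0.
pose B := [set beta | exists x, forall i, F x i <= x i + beta].
have Blb beta : B beta -> F o i0 - M <= beta.
  case=> x Hx; have [j _ Hj] := argminP i0 predT x isT.
  apply: le_trans (_ : F o j <= _); first by rewrite lerBlDr -lerBlDl; exact: HM.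
  rewrite -(lerD2r (x j)) -(homogE F o (x j) j hF) addrC; apply: le_trans _ (Hx j).
  by apply: mF => l; rewrite /o add0r; exact: Hj.
have B0 : B (F o i0 + M).
  by exists o => i; rewrite {2}/o add0r -lerBlDl; exact: HM.
pose r := inf B.
have hinf : has_inf B.
  by split; [exists (F o i0 + M) | exists (F o i0 - M) => b Bb; exact: Blb].
have R1 x beta : (forall i, F x i <= x i + beta) -> r <= beta.
  by move=> H; apply: (ge_inf hinf.2); exists x.
have R2 beta : r < beta -> exists x, forall i, F x i <= x i + beta.
  move=> /(inf_lt (ex_intro _ _ B0)) [b [x Hx] bb]; exists x => i.
  by apply: le_trans (Hx i) _; rewrite lerD2l ltW.
pose V beta := [set y : vec | (forall i, F y i <= y i + beta) /\ (forall i, - M <= y i <= M)].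
have Vne beta : r < beta -> exists y, V beta y.
  move=> /R2 [x Hx]; exists (fun i => F x i - F x i0); split=> i.
  - rewrite (homogE F (F x) (- F x i0) i hF) addrAC lerD2r.
    by rewrite -(homogE F x beta i hF); apply: mF => j; exact: Hx.
  - by apply/andP; split; [rewrite lerNl opprB | ]; exact: HM.
pose I beta i := inf [set y i | y in V beta].
have Ihinf beta i : r < beta -> has_inf [set y i | y in V beta].
  move=> rb; split; first by have [y Vy] := Vne _ rb; exists (y i), y.
  by exists (- M) => _ [y Vy <-]; case: Vy => _ /(_ i)/andP[].
have Ilb beta y i : r < beta -> V beta y -> I beta i <= y i.
  by move=> rb Vy; apply: (ge_inf (Ihinf beta i rb).2); exists y.
have IM beta i : r < beta -> I beta i <= M.
  by move=> rb; have [y Vy] := Vne _ rb; apply: le_trans (Ilb _ _ _ rb Vy) _; case: Vy => _ /(_ i)/andP[].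
have IS beta i : r < beta -> F (I beta) i <= I beta i + beta.
  move=> rb; rewrite -lerBlDr; apply: lb_le_inf; first by have [y Vy] := Vne _ rb; exists (y i), y.
  move=> _ [y Vy <-]; rewrite lerBlDr; apply: le_trans (Vy.1 i).
  by apply: mF => j; exact: Ilb.
have Imon b1 b2 i : r < b1 -> b1 <= b2 -> I b2 i <= I b1 i.
  move=> r1 b12; apply: lb_le_inf; first by have [y Vy] := Vne _ r1; exists (y i), y.
  move=> _ [y [Vy1 Vy2] <-]; apply: Ilb; first exact: lt_le_trans b12.
  by split=> // j; apply: le_trans (Vy1 j) _; rewrite lerD2l.
pose Z i := sup [set I beta i | beta in [set beta | r < beta]].
have r1 : r < r + 1 by rewrite ltrDl ltr01.
have Zhs i : has_sup [set I beta i | beta in [set beta | r < beta]].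
  by split; [exists (I (r + 1) i), (r + 1) | exists M => _ [b rb <-]; exact: IM].
have ZI beta i : r < beta -> I beta i <= Z i.
  by move=> rb; apply: (sup_upper_bound (Zhs i)); exists beta.
have ZS i : F Z i <= Z i + r.
  apply/ler_addgt0Pr => e e0.
  have e20 : 0 < e / 2 by rewrite divr_gt0 // ltr0n.
  have H1 l : exists b, r < b /\ Z l - e / 2 < I b l.
    by have [_ [b rb <-] H] := sup_adherent e20 (Zhs l); exists b.
  have [bf Hbf] := choice H1.
  pose bs := \big[Num.min/(r + e / 2)]_l bf l.
  have rbs : r < bs by apply: lt_bigmin => [|l _]; [rewrite ltrDl | exact: (Hbf l).1].
  have Zbs l : Z l <= I bs l + e / 2.
    rewrite -lerBlDr; apply: ltW; apply: lt_le_trans (Hbf l).2 _.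
    by apply: Imon => //; exact: bigmin_le.
  apply: le_trans (nonexp F Z (I bs) (e / 2) mF hF Zbs i) _.
  apply: le_trans (_ : I bs i + bs + e / 2 <= _); first by rewrite lerD2r; exact: IS.
  have -> : Z i + r + e = Z i + (r + e / 2) + e / 2.
    by rewrite -!addrA -splitr.
  rewrite lerD2r; apply: lerD; first exact: ZI.
  exact: bigmin_le_id.
have [K [w [_ Hrob HK HKM]]] := orbit F Z r mF hF ZS (fun b x H => R1 x b H).
have Kall := HKM M HM.
exists w, r => i; apply/eqP; rewrite eq_le (HK Kall i) /=.
by apply: Hrob => // j _.
Qed.

Lemma ub2 (f : 'I_n -> 'I_n -> R) : exists C, forall i k, f i k <= C.
Proof.
exists (\big[Num.max/0]_i \big[Num.max/0]_k f i k) => i k.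
by apply: le_trans (le_bigmax _ _ i); apply: le_bigmax.
Qed.

Lemma gap (v : vec) (C : R) : 0 < C -> (exists a b, n%:R * C <= v a - v b) ->
  exists J : {set 'I_n}, [/\ exists i, i \in J, exists k, k \notin J &
    forall i k, i \in J -> k \notin J -> C <= v i - v k].
Proof.
move=> C0 [a0 [b Hab]].
have [a _ Ha] := argmaxP a0 predT v isT.
have {}Hab : n%:R * C <= v a - v b.
  by apply: le_trans Hab _; rewrite lerD2r; exact: Ha.
apply: contrapT => nG.
pose S m := [set i | v a - m%:R * C < v i]%SET.
have aS m : (0 < m)%N -> a \in S m.
  by move=> m0; rewrite inE ltrBlDr ltrDl mulr_gt0 // ltr0n.
have bS m : (m <= n)%N -> b \notin S m.
  move=> mn; rewrite inE -leNgt; move: Hab; rewrite lerBrDr addrC -lerBrDr.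
  by move/le_trans; apply; rewrite lerD2l lerN2 ler_pM2r // ler_nat.
have key m : (0 < m)%N -> (m <= n)%N -> (m <= #|S m|)%N.
  elim: m => // m IH _ mn; case: m IH mn => [|m] IH mn.
    by apply/card_gt0P; exists a; exact: aS.
  have := IH isT (ltnW mn); move/leq_ltn_trans; apply; apply: proper_card.
  have [i [k [iJ kJ ik]]] : exists i k, [/\ i \in S m.+1, k \notin S m.+1 & v i - v k < C].
    apply: contrapT => H; apply: nG; exists (S m.+1); split.
    - by exists a; exact: aS.
    - by exists b; apply: bS; exact: ltnW.
    - move=> i k iJ kJ; rewrite leNgt; apply/negP => h; apply: H; by exists i, k.
  apply/properP; split.
    apply/fintype.subsetP => j; rewrite !inE => /(le_lt_trans _); apply.
    by rewrite lerD2l lerN2 ler_pM2r // ler_nat.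
  exists k => //; rewrite inE; move: iJ; rewrite inE => h.
  have e : m.+2%:R * C = m.+1%:R * C + C by rewrite -natr1 mulrDl mul1r.
  rewrite e; lra.
have n0 : (0 < n)%N by apply: leq_ltn_trans (leq0n a) (ltn_ord a).
have SnT : S n = [set: 'I_n]%SET.
  by apply/eqP; rewrite eqEcard finset.subsetT cardsT card_ord key.
by have := bS n (leqnn n); rewrite SnT inE.
Qed.

Lemma nogap F (J : {set 'I_n}) alpha p q : mono F -> homog F ->
  (exists i, i \in J) -> (exists k, k \notin J) ->
  (forall i, i \in J -> F p i < p i + alpha) ->
  (forall k, k \notin J -> q k + alpha < F q k) ->
  exists C, forall v nu, (forall i, i \in J -> v i + nu <= F v i) ->
    (forall k, k \notin J -> F v k <= v k + nu) ->
    (forall i k, i \in J -> k \notin J -> C <= v i - v k) -> False.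
Proof.
move=> mF hF [i1 i1J] [k1 k1J] Hp Hq.
have [C HC] := ub2 (fun i k => Num.max (p i - p k) (q i - q k)).
exists C => v nu Hex Hsub Hgap.
have [i0 i0J Hi0] := argmaxP i1 (mem J) (fun i => v i - p i) i1J.
have vle l : v l <= p l + (v i0 - p i0).
  case: (boolP (l \in J)) => lJ; first by have := Hi0 l lJ; lra.
  have := Hgap i0 l i0J lJ; have := HC i0 l; rewrite ge_max => /andP[hp _]; lra.
have h1 : nu < alpha.
  have := nonexp F v p _ mF hF vle i0; have := Hex i0 i0J; have := Hp i0 i0J; lra.
have [k0 k0J Hk0] := argminP k1 [pred k | k \notin J] (fun i => v i - q i) k1J.
have vge l : q l + (v k0 - q k0) <= v l.
  case: (boolP (l \in J)) => lJ; last by have := Hk0 l lJ; lra.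
  have := Hgap l k0 lJ k0J; have := HC l k0; rewrite ge_max => /andP[_ hq]; lra.
have h2 : alpha < nu.
  have : F q k0 + (v k0 - q k0) <= F v k0.
    by rewrite -(homogE F q _ k0 hF); apply: mF.
  have := Hq k0 k0J; have := Hsub k0 k0J; lra.
lra.
Qed.

Lemma ebetween (a b : \bar R) : (a < b)%E -> exists r : R, ((a < r%:E)%E && (r%:E < b)%E).
Proof.
case: a b => [a||] [b||] //= ab.
- exists ((a + b) / 2); rewrite ?lte_fin in ab *; apply/andP; split; lra.
- by exists (a + 1); rewrite ?lte_fin ltry andbT; lra.
- exists (b - 1); rewrite ?lte_fin in ab *; rewrite ltNyr /=; lra.
- by exists 0; rewrite ltNyr ltry.
Qed.

Lemma extract F (J : {set 'I_n}) : mono F ->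
  (rr (TJ_minf F J) < lam (TJ_pinf F (~: J)))%E ->
  exists alpha p q, (forall i, i \in J -> F p i < p i + alpha) /\
                    (forall k, k \notin J -> q k + alpha < F q k).
Proof.
move=> mF H.
have [_ [x _ <-] Hx] := ereal_inf_lt H.
have [_ [y _ <-] Hy] := ereal_sup_gt Hx.
have [alpha /andP[Ha Hb]] := ebetween _ _ Hy.
exists alpha.
have Hz i : exists z : vec, i \in J -> (forall j, j \in J -> x j <= z j) /\ F z i < x i + alpha.
  case: (boolP (i \in J)) => iJ; last by exists x.
  have : (TJ_minf F J x i - (x i)%:E < alpha%:E)%E.
    by apply: le_lt_trans Ha; exact: (le_bigmax _ _ i).
  rewrite lteBlDr // /TJ_minf /projJ iJ.
  move/ereal_inf_lt => [_ [z Hz <-]]; rewrite -EFinD lte_fin => Fz.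
  exists z => _; split; last by rewrite addrC.
  by move=> j jJ; have := Hz j; rewrite jJ /embed lee_fin.
have [zf Hzf] := choice Hz.
pose p j := if j \in J then x j else \big[Num.min/0]_(i in J) zf i j.
have pz i : i \in J -> forall j, p j <= zf i j.
  move=> iJ j; rewrite /p; case: (boolP (j \in J)) => jJ.
    exact: ((Hzf i iJ).1 j jJ).
  exact: bigmin_le_cond.
have Hw k : exists z : vec, k \notin J -> (forall j, j \notin J -> z j <= y j) /\ y k + alpha < F z k.
  case: (boolP (k \in J)) => kJ; first by exists y.
  have : (alpha%:E < TJ_pinf F (~: J) y k - (y k)%:E)%E.
    exact: lt_le_trans Hb (bigmin_le _ k _).
  rewrite lteBrDr // /TJ_pinf /projJ finset.in_setC kJ.
  move/ereal_sup_gt => [_ [z Hz2 <-]]; rewrite -EFinD lte_fin => Fz.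
  exists z => _; split; last by rewrite addrC.
  by move=> j jJ; have := Hz2 j; rewrite finset.in_setC jJ /embed lee_fin.
have [wf Hwf] := choice Hw.
pose q j := if j \in J then \big[Num.max/0]_(k | k \notin J) wf k j else y j.
have qw k : k \notin J -> forall j, wf k j <= q j.
  move=> kJ j; rewrite /q; case: (boolP (j \in J)) => jJ.
    by apply: le_bigmax_cond.
  exact: ((Hwf k kJ).1 j jJ).
exists p, q; split.
- move=> i iJ; apply: le_lt_trans (mF _ _ (pz i iJ) i) _.
  by rewrite /p iJ; exact: (Hzf i iJ).2.
- move=> k kJ; apply: lt_le_trans (mF _ _ (qw k kJ) k).
  by rewrite /q (negbTE kJ); exact: (Hwf k kJ).2.
Qed.

Lemma bigmax_att (f : vec) (i0 : 'I_n) : exists j, \big[Num.max/f i0]_j f j = f j.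
Proof.
pose K := fun y : R => exists j, y = f j.
suff : K (\big[Num.max/f i0]_j f j) by case=> j ->; exists j.
apply: big_ind => [|x y [j1 ->] [j2 ->]|j _].
- by exists i0.
- by case: leP => _; eexists.
- by exists j.
Qed.

Lemma bigmax_shift (f : vec) (i0 : 'I_n) c :
  \big[Num.max/f i0 + c]_j (f j + c) = \big[Num.max/f i0]_j f j + c.
Proof.
pose K := fun y1 y2 : R => y1 = y2 + c.
suff : K (\big[Num.max/f i0 + c]_j (f j + c)) (\big[Num.max/f i0]_j f j) by [].
apply: big_rec2 => // j y1 y2 _; rewrite /K => ->.
by rewrite addr_maxl.
Qed.

Definition nogapP F (J : {set 'I_n}) C := forall v nu,
  (forall i, i \in J -> v i + nu <= F v i) ->
  (forall k, k \notin J -> F v k <= v k + nu) ->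
  (forall i k, i \in J -> k \notin J -> C <= v i - v k) -> False.

Lemma backward F (i0 : 'I_n) : mono F -> homog F ->
  (forall J : {set 'I_n}, J != finset.set0 -> J != [set: 'I_n]%SET ->
     (rr (TJ_minf F J) < lam (TJ_pinf F (~: J)))%E) ->
  (exists u mu, forall i, F u i = u i + mu) /\
  exists M, forall u mu, (forall i, F u i = u i + mu) -> forall i j, u i - u j <= M.
Proof.
move=> mF hF HC.
have HJ (J : {set 'I_n}) : exists C, (exists i, i \in J) -> (exists k, k \notin J) -> nogapP F J C.
  case: (pselect (exists i, i \in J)) => Ji; last by exists 0.
  case: (pselect (exists k, k \notin J)) => Jk; last by exists 0.
  have J0 : J != finset.set0 by apply/set0Pn.
  have JT : J != [set: 'I_n]%SET.
    by case: Jk => k kJ; apply/negP => /eqP JT; move: kJ; rewrite JT inE.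
  have [alpha [p [q [Hp Hq]]]] := extract F J mF (HC J J0 JT).
  have [C HCn] := nogap F J alpha p q mF hF Ji Jk Hp Hq.
  by exists C.
have [Cf HCf] := choice HJ.
pose C0 := Num.max 1 (\big[Num.max/0]_(J : {set 'I_n}) Cf J).
have C00 : 0 < C0 by rewrite lt_max ltr01.
have CfC J : Cf J <= C0 by rewrite le_max; apply/orP; right; exact: (le_bigmax _ _ J).
have key v nu : (forall i, F v i <= v i + nu) ->
    (forall i, (exists k, v k < v i) -> v i + nu <= F v i) ->
    forall a b, v a - v b < n%:R * C0.
  move=> Hsub Hex a b; rewrite ltNge; apply/negP => hab.
  have [J [Ji Jk HJg]] := gap v C0 C00 (ex_intro _ a (ex_intro _ b hab)).
  apply: (HCf J Ji Jk v nu) => [i iJ|k kJ|i k iJ kJ].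
  - apply: Hex; case: Jk => k kJ; exists k; have := HJg i k iJ kJ; lra.
  - exact: Hsub.
  - exact: le_trans (CfC J) (HJg i k iJ kJ).
pose M := n%:R * C0.
have M0 : 0 <= M by rewrite mulr_ge0 // ltW.
split; last first.
  exists M => u mu Hu i j; apply: ltW; apply: (key u mu) => [l|l _]; rewrite Hu //.
pose bm x := \big[Num.max/F x i0]_j F x j.
pose G x i := Num.max (F x i) (bm x - M).
have bmF x i : F x i <= bm x by exact: (le_bigmax _ _ i).
have mG : mono G.
  move=> x y H i; apply: le_max2; first exact: mF.
  rewrite lerD2r; apply: bigmax_le => [|j _]; first by apply: le_trans (bmF y i0); exact: mF.
  by apply: le_trans (bmF y j); exact: mF.
have hG : homog G.
  move=> x c; apply: funext => i; rewrite /G /bm hF bigmax_shift.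
  by rewrite addrAC addr_maxl.
have HG x i j : G x i - G x j <= M.
  have h1 : G x i <= bm x by rewrite ge_max bmF /= gerBl.
  have h2 : bm x - M <= G x j by rewrite le_max lexx orbT.
  lra.
have [v [nu Hv]] := exist_eig G M i0 mG hG HG.
have Hsub i : F v i <= v i + nu by rewrite -Hv le_max lexx.
have Hex i : (exists k, v k < v i) -> F v i = v i + nu.
  move=> [k vk]; case: (leP (bm v - M) (F v i)) => h.
    by rewrite -Hv /G max_l.
  exfalso.
  have hi : v i + nu = bm v - M by rewrite -Hv /G max_r // ltW.
  have hk : bm v - M <= v k + nu by rewrite -Hv le_max lexx orbT.
  lra.
have Hex' i : (exists k, v k < v i) -> v i + nu <= F v i by move=> h; rewrite Hex.
have Hk := key v nu Hsub Hex'.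
exists v, nu => i.
case: (leP (bm v - M) (F v i)) => h.
  by rewrite -Hv /G max_l.
have [j Hj] := bigmax_att (F v) i0.
have Gj : G v j = bm v by rewrite /G /bm Hj max_l // gerBl.
have Gi : G v i = bm v - M by rewrite /G max_r // ltW.
have hj : v j + nu = bm v by rewrite -Hv Gj.
have hi : v i + nu = bm v - M by rewrite -Hv Gi.
have := Hk j i; rewrite -/M; lra.
Qed.

Lemma pside F (J : {set 'I_n}) u mu G : mono F -> homog F ->
  (forall i, F u i = u i + mu) -> 0 < G ->
  (forall x, exists2 j, j \in J & forall z, (forall i, i \in J -> x i <= z i) -> x j + mu <= F z j) ->
  exists v, (forall i, v i + mu <= F v i) /\
    exists2 j, j \in J & (forall i, v i <= v j) /\ (forall k, k \notin J -> v k + G <= v j).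
Proof.
move=> mF hF Hu G0 P1.
pose H x i := if i \in J then F x i else x i + mu - 1.
have mH : mono H.
  by move=> x y Hxy i; rewrite /H; case: ifP => _; [exact: mF | have := Hxy i; lra].
have hH : homog H.
  by move=> x c; apply: funext => i; rewrite /H; case: ifP => _; [rewrite hF | ring].
have Hz i : H u i <= u i + mu by rewrite /H; case: ifP => _; [rewrite Hu | lra].
have Hmin beta x : (forall i, H x i <= x i + beta) -> mu <= beta.
  move=> Hx; have [j jJ Hj] := P1 x; have := Hj x (fun i _ => lexx _).
  by have := Hx j; rewrite /H jJ; lra.
have [K [w [[k0 Kk0] Hrob _ _]]] := orbit H u mu mH hH Hz Hmin.
have KJ i : K i -> i \in J.
  move=> Ki; apply: contrapT => /negP iJ.
  by have := Hrob w (fun _ _ => lexx _) i Ki; rewrite /H (negbTE iJ); lra.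
pose s := \big[Num.max/0]_i Num.max (u i - w i) (u i - w k0 + G).
have s1 i : u i - w i <= s.
  by apply: le_trans (le_bigmax _ _ i); rewrite le_max lexx.
have s2 i : u i - w k0 + G <= s.
  by apply: le_trans (le_bigmax _ _ i); rewrite le_max lexx orbT.
pose v i := if `[< K i >] then w i else u i - s.
have vK i : K i -> v i = w i by move=> Ki; rewrite /v (asboolT Ki).
have vnK i : ~ K i -> v i = u i - s by move=> Ki; rewrite /v (asboolF Ki).
have vge i : u i - s <= v i.
  case: (pselect (K i)) => Ki; last by rewrite vnK.
  by rewrite vK //; have := s1 i; lra.
exists v; split.
- move=> i; case: (pselect (K i)) => Ki.
    have vKle l : K l -> w l <= v l by move=> Kl; rewrite vK.
    have := Hrob v vKle i Ki.
    by rewrite /H (KJ i Ki) vK.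
  rewrite vnK //; apply: le_trans _ (mF (fun j => u j - s) v vge i).
  rewrite (homogE F u (- s) i hF) Hu; lra.
have [j _ Hj] := argmaxP k0 predT v isT.
have gapk k : k \notin J -> v k + G <= v k0.
  move=> kJ; have nKk : ~ K k by move=> Kk; move: kJ; rewrite KJ.
  by rewrite vnK // vK //; have := s2 k; lra.
exists j; last by split => [i|k kJ]; [exact: Hj | apply: le_trans (gapk k kJ) (Hj k0 isT)].
apply: contrapT => /negP jJ; have := gapk j jJ; have := Hj k0 isT; lra.
Qed.

Definition dual F : vec -> vec := fun x i => - F (fun j => - x j) i.

Lemma dual_mono F : mono F -> mono (dual F).
Proof. by move=> mF x y H i; rewrite /dual lerN2; apply: mF => j; rewrite lerN2. Qed.

Lemma dual_homog F : homog F -> homog (dual F).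
Proof.
move=> hF x c; apply: funext => i; rewrite /dual.
have -> : (fun j => - (x j + c)) = (fun j => - x j + - c) by apply: funext => j; rewrite opprD.
by rewrite hF opprD opprK.
Qed.

Lemma sside F (J : {set 'I_n}) u mu G : mono F -> homog F ->
  (forall i, F u i = u i + mu) -> 0 < G ->
  (forall y, exists2 k, k \notin J & forall z, (forall i, i \notin J -> z i <= y i) -> F z k <= y k + mu) ->
  exists v, (forall i, F v i <= v i + mu) /\
    exists2 k, k \notin J & (forall i, v k <= v i) /\ (forall i, i \in J -> v k + G <= v i).
Proof.
move=> mF hF Hu G0 P2.
have Hu' i : dual F (fun j => - u j) i = - u i + - mu.
  rewrite /dual; have -> : (fun j => - - u j) = u by apply: funext => j; rewrite opprK.
  by rewrite Hu opprD.
have P1 x : exists2 j, j \in ~: J & forall z, (forall i, i \in ~: J -> x i <= z i) ->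
    x j + - mu <= dual F z j.
  have [k kJ Hk] := P2 (fun j => - x j); exists k; first by rewrite finset.in_setC.
  move=> z Hz.
  have hz i : i \notin J -> (fun j => - z j) i <= - x i.
    by move=> iJ; rewrite lerN2; apply: Hz; rewrite finset.in_setC.
  by have := Hk _ hz; rewrite /dual; lra.
have [v [Pv [j jJ [Hj1 Hj2]]]] := pside (dual F) (~: J) (fun j => - u j) (- mu) G (dual_mono F mF) (dual_homog F hF) Hu' G0 P1.
exists (fun i => - v i); split.
- move=> i; have := Pv i; rewrite /dual; lra.
- exists j; first by move: jJ; rewrite finset.in_setC.
  split=> [i|i iJ]; first by have := Hj1 i; lra.
  by have := Hj2 i; rewrite finset.in_setC iJ => /(_ isT); lra.
Qed.

Lemma failP F (J : {set 'I_n}) u mu : (forall i, F u i = u i + mu) ->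
  (lam (TJ_pinf F (~: J)) <= rr (TJ_minf F J))%E ->
  (forall x, exists2 j, j \in J & forall z, (forall i, i \in J -> x i <= z i) -> x j + mu <= F z j) /\
  (forall y, exists2 k, k \notin J & forall z, (forall i, i \notin J -> z i <= y i) -> F z k <= y k + mu).
Proof.
move=> Hu Hf.
have hlam : (mu%:E <= lam (TJ_pinf F (~: J)))%E.
  apply: le_ereal_sup_tmp; eexists; first by exists u.
  apply: le_bigmin => [|i _]; first by rewrite leey.
  rewrite /TJ_pinf /projJ; case: ifP => iJc; last by rewrite ?addye ?leey.
  rewrite leeBrDr // -EFinD; apply: le_ereal_sup_tmp; exists (F u i)%:E.
    exists u => // j; rewrite /projJ /embed; case: ifP => _; [exact: lexx | exact: leey].
  by rewrite Hu lee_fin addrC.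
have hrr : (rr (TJ_minf F J) <= mu%:E)%E.
  apply: ge_ereal_inf; eexists; first by exists u.
  apply: bigmax_le => [|i _]; first by rewrite leNye.
  rewrite /TJ_minf /projJ; case: ifP => iJ; last by rewrite ?addNye ?leNye.
  rewrite leeBlDr // -EFinD; apply: ge_ereal_inf; exists (F u i)%:E.
    exists u => // j; rewrite /projJ /embed; case: ifP => _; [exact: lexx | exact: leNye].
  by rewrite Hu lee_fin addrC.
split.
- move=> x.
  have hx : (mu%:E <= \big[maxe/-oo]_i (TJ_minf F J x i - (x i)%:E))%E.
    apply: le_trans hlam _; apply: le_trans Hf _; apply: ereal_inf_lbound; by exists x.
  have [i Hi] : exists i, (mu%:E <= TJ_minf F J x i - (x i)%:E)%E.
    apply: contrapT => H; move: hx; rewrite leNgt => /negP; apply.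
    apply: bigmax_lt => [|i _]; first by rewrite ltNye.
    by rewrite ltNge; apply/negP => h; apply: H; exists i.
  move: Hi; rewrite /TJ_minf /projJ; case: ifP => iJ; last by rewrite ?addNye leeNy_eq.
  rewrite leeBrDr // -EFinD => Hi; exists i => // z Hz.
  have : (ext_lo F (projJ J -oo (embed x)) i <= (F z i)%:E)%E.
    apply: ereal_inf_lbound; exists z => // j; rewrite /projJ /embed.
    by case: ifP => jJ; [rewrite lee_fin; exact: Hz | exact: leNye].
  by move/(le_trans Hi); rewrite lee_fin addrC.
- move=> y.
  have hy : (\big[mine/+oo]_i (TJ_pinf F (~: J) y i - (y i)%:E) <= mu%:E)%E.
    apply: le_trans _ hrr; apply: le_trans _ Hf; apply: ereal_sup_ubound; by exists y.
  have [k Hk] : exists k, (TJ_pinf F (~: J) y k - (y k)%:E <= mu%:E)%E.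
    apply: contrapT => H; move: hy; rewrite leNgt => /negP; apply.
    apply: lt_bigmin => [|k _]; first by rewrite ltey.
    by rewrite ltNge; apply/negP => h; apply: H; exists k.
  move: Hk; rewrite /TJ_pinf /projJ; case: ifP => kJ; last by rewrite addye // leye_eq.
  rewrite leeBlDr // -EFinD => Hk; exists k; first by rewrite -finset.in_setC.
  move=> z Hz.
  have : ((F z k)%:E <= ext_hi F (projJ (~: J) +oo (embed y)) k)%E.
    apply: ereal_sup_ubound; exists z => // j; rewrite /projJ /embed.
    case: ifP => jJ; [rewrite lee_fin; apply: Hz; by rewrite -finset.in_setC | exact: leey].
  by move/le_trans => /(_ _ Hk); rewrite lee_fin addrC.
Qed.

Lemma forward F : mono F -> homog F ->
  (exists u mu, forall i, F u i = u i + mu) ->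
  (exists M, forall u mu, (forall i, F u i = u i + mu) -> forall i j, u i - u j <= M) ->
  forall J : {set 'I_n}, J != finset.set0 -> J != [set: 'I_n]%SET ->
    (rr (TJ_minf F J) < lam (TJ_pinf F (~: J)))%E.
Proof.
move=> mF hF [u [mu Hu]] [M HM] J J0 JT.
rewrite ltNge; apply/negP => Hf.
have [P1 P2] := failP F J u mu Hu Hf.
pose G := Num.max M 0 + 1.
have G0 : 0 < G by rewrite /G ltr_wpDl // le_max lexx orbT.
have [v [Pv [j jJ [Hj1 Hj2]]]] := pside F J u mu G mF hF Hu G0 P1.
have [v' [Sv' [k kJ [Hk1 Hk2]]]] := sside F J u mu G mF hF Hu G0 P2.
pose y i := v i + (G - v j).
pose x i := v' i + (- v' k).
have Py i : y i + mu <= F y i.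
  by rewrite /y (homogE F v _ i hF); have := Pv i; lra.
have Sx i : F x i <= x i + mu.
  by rewrite /x (homogE F v' _ i hF); have := Sv' i; lra.
have yx i : y i <= x i.
  rewrite /y /x; case: (boolP (i \in J)) => iJ.
    by have := Hj1 i; have := Hk2 i iJ; lra.
  by have := Hj2 i iJ; have := Hk1 i; lra.
have [w [Hw Ew]] := tarski F mu x y mF yx Py Sx.
have := HM w mu Ew j k.
have := (Hw j).1; have := (Hw k).2; rewrite /y /x.
have : M <= Num.max M 0 by rewrite le_max lexx.
rewrite /G; lra.
Qed.

End Basics.

Lemma var_ge (R : realType) (n : nat) (x : 'I_n -> R) i j : x i - x j <= var_norm x.
Proof. by rewrite /var_norm; apply: le_trans (le_bigmax _ _ i); exact: (le_bigmax _ _ j). Qed.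

Lemma var_le (R : realType) (n : nat) (x : 'I_n -> R) M : 0 <= M ->
  (forall i j, x i - x j <= M) -> var_norm x <= M.
Proof. by move=> M0 H; apply: bigmax_le => // i _; apply: bigmax_le => // j _. Qed.


Local Close Scope ring_scope.

Theorem theorem7p4 (R : realType) (n : nat) (T : ('I_n -> R) -> 'I_n -> R) :
  topical T ->
  ((add_eigvecs T !=set0) /\ var_bounded (add_eigvecs T) <->
   (forall J : {set 'I_n}, J != finset.set0 -> J != [set: 'I_n]%SET ->
      (rr (TJ_minf T J) < lam (TJ_pinf T (~: J)))%E)).
Proof.
move=> [mT hT]; split.
- move=> [[u [mu Hu]] [M HM]].
  apply: (@forward R n T mT hT); first by exists u, mu.
  exists M => v nu Hv i j.
  exact: le_trans (@var_ge R n v i j) (HM v (ex_intro _ nu Hv)).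
- case: n T mT hT => [|n] T mT hT HC.
    split; first by exists (fun _ => 0%R), 0%R => -[].
    by exists 0%R => x _; rewrite /var_norm big_ord0.
  have [[u [mu Hu]] [M HM]] := @backward R n.+1 T ord0 mT hT HC.
  split; first by exists u, mu.
  exists (Num.max M 0%R) => x [lam Hx]; apply: var_le; first by rewrite le_max lexx orbT.
  by move=> i j; apply: le_trans (HM x lam Hx i j) _; rewrite le_max lexx.
Qed.
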